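(* The Filtered Greedy Strategy (\texttt{FGS}) is a 3-approximation algorithm for \textbf{LTSP}: for every instance, the set $\mathcal B_1^{\mathrm{FGS}}$ it returns satisfies $v(\mathcal B_1^{\mathrm{FGS}})\le 3\,\mathrm{OPT}$, where $\mathrm{OPT}$ is the minimum total response time of the instance.
   Context: A single-track tape stores a sequence of files $\mathcal F=(f_1,\dots,f_n)$ laid out contiguously from left to right: file $f$ occupies blocks $l(f),\dots,r(f)$, has size $s(f)=r(f)-l(f)+1$, $l(f_1)=1$, $l(f_{i+1})=r(f_i)+1$, and $m=\sum_f s(f)$. The tape moves one block per time step; at time $0$ the head is at position $m$. A file is read when the head traverses it rightwards from $l(f)$ to $r(f)$. $\mathcal R$ is a finite set of requests, all released at time $0$, each associated with a file $f(r)$; $n(f)$ is the number of requests for $f$. A request's response time is the time at which the head starts a rightward reading traversal of its file (all pending requests of a file are serviced simultaneously). \textbf{LTSP} asks for a head movement minimizing the sum of response times. For files, $f'<f$ means $l(f')<l(f)$. A mini-batch is a pair $b=(f,f')$ of files with $l(f)\le l(f')$; $l(b)=l(f)$, $r(b)=r(f')$, $s(b)=r(b)-l(b)+1$, $\mathcal F(b)$ is the set of files $g$ with $l(b)\le l(g)$, $r(g)\le r(b)$; for a set $\mathcal B_1$, $\mathcal F(\mathcal B_1)=\bigcup_{b\in\mathcal B_1}\mathcal F(b)$, and $b<f$ means $l(b)<l(f)$. Given $\mathcal B_1$, its schedule is: Phase 1, the head moves leftwards from $m$ to $1$, and upon reaching $l(b)$ for $b\in\mathcal B_1$ executes $b$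 (moves rightwards to $r(b)$, reading all files of $\mathcal F(b)$, and returns to $l(b)$), then continues leftwards; Phase 2, the head moves rightwards from $1$ to $m$ reading every file; $v(\mathcal B_1)$ is its total response time. The Greedy Strategy (\texttt{GS}) returns $\{(f,f): f\in\mathcal F\setminus\{f_1\},\ n(f)>0\}$. \texttt{FGS} starts with $\mathcal B_1$ equal to the output of \texttt{GS} and then, for $|\mathcal F|$ rounds, for each file $f\in\mathcal F(\mathcal B_1)$ (with the current $\mathcal B_1$) removes $(f,f)$ from $\mathcal B_1$ whenever $n(f)\bigl(l(f)+\sum_{b\in\mathcal B_1,\ b<f}s(b)\bigr) < s(f)\bigl(\sum_{f'\in\mathcal F,\ f'<f}n(f')+\sum_{f'\in\mathcal F\setminus\mathcal F(\mathcal B_1),\ f'>f}n(f')\bigr)$; it returns the final $\mathcal B_1$. *)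

(* Defs.v *)
From mathcomp Require Import all_boot.
Set Implicit Arguments. Unset Strict Implicit. Unset Printing Implicit Defensive.

(* Instance.  Files f_1..f_n are indexed 0..n-1 (index i = file f_(i+1)).     *)
(*   s    : seq nat   sizes s(f) (all positive), n = size s                  *)
(*   req  : seq nat   the request set R, each request given by the index of  *)
(*                    its file f(r); n(f) = count_mem f req.                  *)
(* Tape positions are block boundaries 0..m: block p is the unit segment     *)
(* [p-1, p]; hence file f occupies [l(f)-1, r(f)], the head starts at the    *)
(* right end m, and reading f = a rightward traversal from l(f)-1 to r(f)    *)
(* (s(f) unit moves).                                                         *)

Section LTSP.
Variables (s : seq nat) (req : seq nat).

Definition nfiles := size s.
Definition sz (f : nat) : nat := nth 0 s f.
Definition mtot : nat := sumn s.
Definition lpos (f : nat) : nat := (sumn (take f s)).+1.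
Definition rpos (f : nat) : nat := lpos f + sz f - 1.
Definition ledge (f : nat) : nat := sumn (take f s).
Definition nreq (f : nat) : nat := count_mem f req.

(* A head movement is the sequence of head positions at times 0,1,...,K.     *)
Definition step_ok (a b : nat) : bool := (a == b.+1) || (b == a.+1).

Definition movement (tr : seq nat) : bool :=
  [&& head 0 tr == mtot, size tr > 0, all (fun p => p <= mtot) tr
    & all (fun t => step_ok (nth 0 tr t) (nth 0 tr t.+1)) (iota 0 (size tr).-1)].

Definition reads (tr : seq nat) (f t : nat) : bool :=
  (t + sz f < size tr) &&
  all (fun k => nth 0 tr (t + k) == ledge f + k) (iota 0 (sz f).+1).

(* response time of (all pending requests of) file f: first reading start *)
Definition resp (tr : seq nat) (f : nat) : nat := find (reads tr f) (iota 0 (size tr)).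

Definition serves_all (tr : seq nat) : bool :=
  all (fun f => has (reads tr f) (iota 0 (size tr))) req.

Definition feasible (tr : seq nat) : bool := movement tr && serves_all tr.

Definition total_resp (tr : seq nat) : nat := sumn [seq resp tr f | f <- req].

(* a mini-batch b = (f, f') (file indices, f <= f') *)
Definition bl (b : nat * nat) : nat := lpos b.1.
Definition br (b : nat * nat) : nat := rpos b.2.
Definition bsz (b : nat * nat) : nat := br b - bl b + 1.
Definition bledge (b : nat * nat) : nat := ledge b.1.

Definition inFB (B1 : seq (nat * nat)) (g : nat) : bool :=
  has (fun b => (bl b <= lpos g) && (rpos g <= br b)) B1.

(* executing b from its left boundary p: move right to r(b), come back to p *)
Definition detour (p q : nat) : seq nat := iota p.+1 (q - p) ++ rev (iota p (q - p)).

Definition detours_at (B1 : seq (nat * nat)) (p : nat) : seq nat :=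
  flatten [seq detour p (br b) | b <- undup B1 & bledge b == p].

(* Phase 1 positions after being at p (p excluded) *)
Fixpoint phase1 (B1 : seq (nat * nat)) (p : nat) : seq nat :=
  detours_at B1 p ++ (match p with 0 => [::] | p'.+1 => p' :: phase1 B1 p' end).

Definition schedule (B1 : seq (nat * nat)) : seq nat :=
  mtot :: phase1 B1 mtot ++ iota 1 mtot.

Definition v (B1 : seq (nat * nat)) : nat := total_resp (schedule B1).

Definition GS : seq (nat * nat) :=
  [seq (f, f) | f <- iota 1 (nfiles - 1) & 0 < nreq f].

Definition fgs_cond (B1 : seq (nat * nat)) (f : nat) : bool :=
  nreq f * (lpos f + sumn [seq bsz b | b <- undup B1 & bl b < lpos f])
  < sz f * (sumn [seq nreq f' | f' <- iota 0 nfiles & f' < f]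
            + sumn [seq nreq f' | f' <- iota 0 nfiles & (~~ inFB B1 f') && (f < f')]).

Definition fgs_step (B1 : seq (nat * nat)) (f : nat) : seq (nat * nat) :=
  if inFB B1 f && fgs_cond B1 f then filter (predC1 (f, f)) B1 else B1.

Definition fgs_round (B1 : seq (nat * nat)) : seq (nat * nat) :=
  foldl fgs_step B1 (iota 0 nfiles).

Definition FGS : seq (nat * nat) := iter nfiles fgs_round GS.

End LTSP.

(* Main.v *)
Require Import Defs.
From mathcomp Require Import all_boot.
From mathcomp Require Import zify.
Set Implicit Arguments. Unset Strict Implicit.

Lemma sum_pick n f (F : nat -> nat) : f < n -> \sum_(0<=h<n) (if h == f then F h else 0) = F f.
Proof.
move=> fn; rewrite (bigD1_seq f) ?mem_index_iota ?iota_uniq //= eqxx big1 ?addn0 //.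
by move=> i /negbTE ->.
Qed.

Lemma sum_cond_le n (A B : pred nat) (F G : nat -> nat) :
  (forall h, h < n -> A h -> B h && (F h <= G h)) ->
  \sum_(0<=h<n | A h) F h <= \sum_(0<=h<n | B h) G h.
Proof.
move=> H; rewrite big_nat_cond [X in _ <= X]big_nat_cond big_mkcond [X in _ <= X]big_mkcond.
apply: leq_sum => i _; case: ifP => [/andP[/andP[_ hi] ha]|_] //.
by have /andP[hb hle] := H i hi ha; rewrite /= hi hb.
Qed.


Section S.
Variables (s req : seq nat).
Hypothesis spos : all (fun x => 0 < x) s.
Local Notation n := (size s).

Lemma szpos h : h < n -> 0 < sz s h.
Proof. by move=> hn; rewrite /sz; apply: (allP spos); rewrite mem_nth. Qed.

Lemma ledgeE g : g <= n -> ledge s g = \sum_(0 <= h < g) sz s h.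
Proof.
elim: g => [|g IH] hg; first by rewrite /ledge take0 big_geq.
rewrite /ledge (take_nth 0) // -cats1 sumn_cat /= addn0 big_nat_recr //=.
by rewrite -IH ?(ltnW hg).
Qed.

Lemma mtotE : mtot s = \sum_(0 <= h < n) sz s h.
Proof. by rewrite /mtot -(@ledgeE n (leqnn n)) /ledge take_size. Qed.

Lemma ledge_lt g h : g < h -> h <= n -> ledge s g + sz s g <= ledge s h.
Proof.
move=> gh hn; rewrite !ledgeE ?(leq_trans (ltnW gh)) //.
rewrite (big_cat_nat (leq0n g) (ltnW gh)) /= leq_add2l big_ltn //.
by rewrite leq_addr.
Qed.

Lemma ledge_mtot g : g < n -> ledge s g + sz s g <= mtot s.
Proof.
move=> gn; rewrite (@ledgeE g (ltnW gn)) mtotE -big_nat_recr //=.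
by rewrite [X in _ <= X](big_cat_nat (leq0n g.+1) gn) /= leq_addr.
Qed.

Lemma mtot_split g : g < n ->
  mtot s = ledge s g + sz s g + \sum_(0 <= h < n | g < h) sz s h.
Proof.
move=> gn; rewrite (@ledgeE g (ltnW gn)) mtotE -big_nat_recr //=.
rewrite (big_cat_nat (leq0n g.+1) gn) /=; congr (_ + _).
rewrite [RHS](big_cat_nat (leq0n g.+1) gn) /=.
have -> : \sum_(0 <= i < g.+1 | g < i) sz s i = 0.
  rewrite big_nat_cond big1 // => i /andP[/andP[_]]; rewrite ltnS => a b; lia.
rewrite add0n [RHS]big_nat_cond [LHS]big_nat_cond; apply: eq_bigl => i.
by case: (ltnP g i); rewrite ?andbT ?andbF // => a; apply/negP => /andP[/andP[b _]]; lia.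
Qed.

Lemma ledge_inj g h : g < n -> h < n -> ledge s g = ledge s h -> g = h.
Proof.
move=> gn hn e; case: (ltngtP g h) => // lt.
  by have := ledge_lt lt (ltnW hn); have := szpos gn; lia.
by have := ledge_lt lt (ltnW gn); have := szpos hn; lia.
Qed.

Lemma ledge_ltE g h : g < n -> h < n -> (ledge s g < ledge s h) = (g < h).
Proof.
move=> gn hn; case: (ltngtP g h) => lt.
- by have := ledge_lt lt (ltnW hn); have := szpos gn; lia.
- by have := ledge_lt lt (ltnW gn); lia.
- by rewrite lt ltnn.
Qed.
Definition Ysum (P : pred nat) g := \sum_(0<=h<n | P h && (h < g)) sz s h.
Definition Xn (P : pred nat) g := \sum_(0<=h<n | ~~ P h && (g < h)) sz s h.
Definition LHS_ (P : pred nat) :=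
  \sum_(0<=g<n) nreq req g * (if P g then 0 else ledge s g + Ysum P g).
Definition R0 (P : pred nat) := \sum_(0<=g<n) nreq req g * (sz s g + Xn P g).
Definition Nl f := \sum_(0<=g<n | g < f) nreq req g.
Definition Nr (P : pred nat) f := \sum_(0<=g<n | ~~ P g && (f < g)) nreq req g.

Lemma step_pot (P : pred nat) f :
  f < n -> P f -> nreq req f * (ledge s f + Ysum P f) <= sz s f * (Nl f + Nr P f) ->
  LHS_ P <= R0 P -> LHS_ (fun g => P g && (g != f)) <= R0 (fun g => P g && (g != f)).
Proof.
move=> fn Pf cond inv.
set P' := (fun g => P g && (g != f)).
have XnE g : Xn P' g = Xn P g + (if g < f then sz s f else 0).
  rewrite /Xn big_mkcond [X in _ = X + _]big_mkcond -(sum_pick (fun h => if g < h then sz s h else 0) fn).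
  rewrite -big_split /=; apply: eq_bigr => h _; rewrite /P'.
  by case: (eqVneq h f) => [->|hf]; rewrite ?Pf ?andbF ?andbT //= ?addn0.
have R0E : R0 P' = R0 P + sz s f * Nl f.
  rewrite /R0 /Nl big_distrr /= [X in _ = _ + X]big_mkcond -big_split /=.
  apply: eq_bigr => g _; rewrite XnE; case: ifP => _; lia.
have YE g : Ysum P g = Ysum P' g + (if f < g then sz s f else 0).
  rewrite /Ysum big_mkcond [X in _ = X + _]big_mkcond -(sum_pick (fun h => if h < g then sz s h else 0) fn).
  rewrite -big_split /=; apply: eq_bigr => h _; rewrite /P'.
  by case: (eqVneq h f) => [->|hf]; rewrite ?Pf ?andbF ?andbT //= ?addn0.
have LE : LHS_ P' + sz s f * Nr P f = LHS_ P + nreq req f * (ledge s f + Ysum P f).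
  rewrite /LHS_ /Nr big_distrr /= [X in _ = _ + X](_ : _ = \sum_(0<=g<n)
     (if g == f then nreq req f * (ledge s f + Ysum P f) else 0)); last first.
    by rewrite (sum_pick (fun _ => nreq req f * (ledge s f + Ysum P f)) fn).
  rewrite [X in _ + X = _]big_mkcond -!big_split /=; apply: eq_bigr => g _.
  rewrite [P' g]/P'; case: (eqVneq g f) => [->|gf]; rewrite ?Pf ?ltnn ?andbF ?andbT /=.
    by rewrite YE ltnn addn0; lia.
  case: (P g) => /=; first lia.
  by rewrite YE; case: ifP => _; lia.
lia.
Qed.

Definition BofP (P : pred nat) : seq (nat * nat) := [seq (f, f) | f <- iota 0 n & P f].

Lemma BofP_uniq P : uniq (BofP P).
Proof. by rewrite map_inj_uniq ?filter_uniq ?iota_uniq // => x y []. Qed.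

Lemma iotaE : iota 0 n = index_iota 0 n.
Proof. by rewrite /index_iota subn0. Qed.

Lemma cond_trans P f : f < n -> fgs_cond s req (BofP P) f ->
  nreq req f * (ledge s f + Ysum P f) <= sz s f * (Nl f + Nr P f).
Proof.
move=> fn; rewrite /fgs_cond (undup_id (BofP_uniq P)) /nfiles.
have S1 : Ysum P f <= sumn [seq bsz s b | b <- BofP P & bl s b < lpos s f].
  rewrite sumnE big_map big_filter /BofP big_map big_filter_cond iotaE.
  apply: sum_cond_le => h hn /andP[Ph hf]; rewrite Ph /=; apply/andP; split.
    by rewrite /bl /= /lpos ltnS -/(ledge s h) -/(ledge s f) ledge_ltE.
  by rewrite /bsz /br /bl /= /rpos /lpos; lia.
have S2 : sumn [seq nreq req f' | f' <- iota 0 n & f' < f] = Nl f.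
  by rewrite sumnE big_map big_filter iotaE.
have S3 : sumn [seq nreq req f' | f' <- iota 0 n & ~~ inFB s (BofP P) f' && (f < f')] <= Nr P f.
  rewrite sumnE big_map big_filter iotaE; apply: sum_cond_le => g gn /andP[nin fg].
  rewrite fg leqnn !andbT; apply: contra nin => Pg; apply/hasP; exists (g, g).
    by rewrite map_f // mem_filter Pg mem_iota.
  by rewrite /bl /br /= !leqnn.
rewrite S2 => H.
have lp : lpos s f = ledge s f + 1 by rewrite /lpos addn1.
have := leq_mul (leqnn (sz s f)) (leq_add (leqnn (Nl f)) S3).
have := leq_mul (leqnn (nreq req f)) (leq_add (leqnn (ledge s f)) S1).
move: H; rewrite lp in S1 *.
set a := nreq req f * _; set b := sz s f * _; set c := nreq req f * _; set d := sz s f * _.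
move=> H1 H2 H3.
have : nreq req f * (ledge s f + Ysum P f) <= a.
  rewrite /a; apply: leq_mul => //; lia.
lia.
Qed.

Definition Inv (B : seq (nat * nat)) := exists P, B = BofP P /\ LHS_ P <= R0 P.

Lemma step_inv B f : Inv B -> Inv (fgs_step s req B f).
Proof.
case=> P [-> inv]; rewrite /fgs_step; case: ifP => [/andP[_ c]|_]; last by exists P.
rewrite /BofP filter_map -filter_predI.
case: (boolP ((f < n) && P f)) => [/andP[fn Pf] | nf].
  exists (fun g => P g && (g != f)); split; last by apply: step_pot => //; exact: cond_trans.
  by congr map; apply: eq_filter => g /=; rewrite xpair_eqE andbb andbC.
exists P; split => //; congr map; apply: eq_in_filter => g; rewrite mem_iota => /andP[_ gn] /=.
case Pg: (P g); rewrite ?andbT ?andbF //=; apply/eqP => -[gf]; rewrite -gf gn Pg in nf; by [].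
Qed.

Lemma FGS_inv : Inv (FGS s req).
Proof.
rewrite /FGS; elim: (nfiles s) => [|k IH] /=.
  exists (fun f => (0 < f) && (0 < nreq req f)); split.
    rewrite /GS /BofP /nfiles; congr map; case: (size s) => [|m] //=.
    rewrite subn1 /=; apply: eq_in_filter => x; rewrite mem_iota => /andP[x1 _].
    by rewrite x1.
  rewrite /LHS_ big1 // => g _; case: g => [|g]; last first.
    by case: (nreq req g.+1) => [|k0] /=; rewrite ?mul0n ?muln0.
  by rewrite /= /ledge take0 /Ysum big1 ?muln0 // => h /andP[_]; rewrite ltn0.
rewrite /fgs_round; elim: (iota 0 (nfiles s)) (iter k _ _) IH => [|x l IHl] B HB //=.
by apply: IHl; apply: step_inv.
Qed.
End S.

Section S.
Variables (s req : seq nat).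

Lemma move_lb tr : movement s tr -> forall t, t < size tr -> mtot s - t <= nth 0 tr t.
Proof.
case/and4P => /eqP h0 _ _ /allP st; elim => [|t IH] lt.
  by rewrite nth0 h0 subn0.
have := st t; rewrite mem_iota add0n => /(_ (ltac:(lia))).
rewrite /step_ok => /orP[] /eqP; have := IH (ltnW lt); lia.
Qed.

Lemma resp_lb tr f : feasible s req tr -> f \in req -> mtot s - ledge s f <= resp s tr f.
Proof.
case/andP => mv /allP sv fr; have := sv f fr => hs.
have lt0 : resp s tr f < size tr by have := hs; rewrite has_find size_iota.
have := nth_find 0 hs; rewrite -/(resp s tr f) nth_iota // add0n.
case/andP => _ /allP /(_ 0); rewrite mem_iota /= !addn0 => /(_ isT) /eqP <-.

have := move_lb mv lt0; lia.
Qed.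
End S.

Lemma drop_size_cat (T : Type) (a l : seq T) k : drop (size a + k) (a ++ l) = drop k l.
Proof. by elim: a. Qed.

Lemma drop_last (T : Type) (l r : seq T) x : drop (size l) (x :: l ++ r) = last x l :: r.
Proof. by elim: l x => [|y l IH] x //=. Qed.

Lemma sum_pick_range a c x (F : nat -> nat) :
  \sum_(a <= i < c) (if i == x then F i else 0) = if a <= x < c then F x else 0.
Proof.
case: ifP => xin.
  rewrite (bigD1_seq x) ?mem_index_iota ?iota_uniq //= eqxx big1 ?addn0 //.
  by move=> i /negbTE ->.
rewrite big_nat_cond big1 // => i /andP[ir _]; case: eqP => // e.
by rewrite -e ir in xin.
Qed.

Section S.
Variables (s req : seq nat).
Local Notation n := (size s).
Variable B : seq (nat * nat).

Local Notation D p := (detours_at s B p).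

Definition K p q := (p - q) + \sum_(q.+1 <= i < p.+1) size (D i).

Lemma drop_phase1 p q r : q <= p -> drop (K p q) (p :: phase1 s B p ++ r) = q :: phase1 s B q ++ r.
Proof.
elim: p => [|p IH]; first by rewrite leqn0 => /eqP ->; rewrite /K big_geq.
rewrite leq_eqVlt => /orP[/eqP ->|]; first by rewrite /K subnn big_geq.
rewrite ltnS => qp.
have E : \sum_(q.+1 <= i < p.+2) size (D i) = \sum_(q.+1 <= i < p.+1) size (D i) + size (D p.+1).
  by rewrite big_nat_recr.
rewrite /K E -/(K p q).
have -> : p.+1 - q + (\sum_(q.+1 <= i < p.+1) size (D i) + size (D p.+1)) = (size (D p.+1) + K p q).+1.
  rewrite /K; set S1 := \sum_(_ <= _ < _) _; set S2 := size _; lia.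
by rewrite /= -catA drop_size_cat IH.
Qed.

Lemma phase1E p : phase1 s B p = D p ++ (if p is p'.+1 then p' :: phase1 s B p' else [::]).
Proof. by case: p. Qed.

Lemma size_phase1 p : size (phase1 s B p) = p + \sum_(0 <= i < p.+1) size (D i).
Proof.
elim: p => [|p IH] /=; first by rewrite cats0 big_nat1.
have E : \sum_(0 <= i < p.+2) size (D i) = \sum_(0 <= i < p.+1) size (D i) + size (D p.+1).
  by rewrite big_nat_recr.
by rewrite size_cat /= IH E; lia.
Qed.

Lemma last_detour p q : last p (detour p q) = p.
Proof.
rewrite /detour last_cat; case: (q - p) => [|k] //=.
by rewrite rev_cons last_rcons.
Qed.

Lemma last_D p : last p (D p) = p.
Proof.
rewrite /detours_at; elim: [seq _ <- _ | _] => [|b l IH] //=.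
by rewrite last_cat last_detour.
Qed.

Lemma last_phase1 p : last p (phase1 s B p) = 0.
Proof.
elim: p => [|p IH] /=; first by rewrite cats0 last_D.
by rewrite last_cat last_D.
Qed.

Lemma size_D p : size (D p) = \sum_(b <- undup B | bledge s b == p) ((br s b - p) + (br s b - p)).
Proof.
rewrite /detours_at size_flatten /shape -map_comp sumnE big_map big_filter.
by apply: eq_bigr => b _ /=; rewrite /detour size_cat size_rev !size_iota.
Qed.
End S.

Lemma readsI s tr f t : take (sz s f).+1 (drop t tr) = iota (ledge s f) (sz s f).+1 -> reads s tr f t.
Proof.
move=> H; apply/andP; split.
  have := congr1 size H; rewrite size_take size_drop size_iota.
  by case: ltnP => h e; lia.
apply/allP => k; rewrite mem_iota add0n => /andP[_ kl].
have E : nth 0 (take (sz s f).+1 (drop t tr)) k = nth 0 (iota (ledge s f) (sz s f).+1) k by rewrite H.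
rewrite nth_take // nth_drop nth_iota // in E; rewrite E.
by rewrite addnC.
Qed.

Lemma resp_le s tr f t : reads s tr f t -> resp s tr f <= t.
Proof.
move=> r; have tl : t < size tr by case/andP: r => h _; lia.
rewrite /resp; case: leqP => // lt; have := before_find 0 lt.
by rewrite nth_iota // add0n r.
Qed.

Section S2.
Variables (s req : seq nat).
Hypothesis spos : all (fun x => 0 < x) s.
Local Notation n := (size s).
Variable P : pred nat.
Local Notation B := (BofP s P).
Local Notation D p := (detours_at s B p).

Lemma size_DP p : size (D p) = \sum_(0<=h<n | P h && (ledge s h == p)) (sz s h + sz s h).
Proof.
rewrite size_D (undup_id (BofP_uniq s P)) /BofP big_map big_filter_cond iotaE.
apply: eq_bigr => h /andP[_ /eqP e]; rewrite /br /rpos /lpos /= -e /bledge /ledge /=; lia.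
Qed.

Lemma sum_exch a c (F : nat -> nat) :
  \sum_(a <= i < c) \sum_(0<=h<n | P h && (ledge s h == i)) F h =
  \sum_(0<=h<n | P h && (a <= ledge s h < c)) F h.
Proof.
transitivity (\sum_(a<=i<c) \sum_(0<=h<n) (if P h && (ledge s h == i) then F h else 0)).
  by apply: eq_bigr => i _; rewrite big_mkcond.
rewrite exchange_big_nat /= [RHS]big_mkcond; apply: eq_bigr => h _.
case: (P h) => /=; last by rewrite big1.
rewrite -(sum_pick_range a c (ledge s h) (fun _ => F h)); apply: eq_bigr => i _.
by rewrite eq_sym.
Qed.

Definition tP g := if P g then (mtot s - ledge s g) + 2 * \sum_(0<=h<n | P h && (g < h)) sz s h
                   else mtot s + 2 * \sum_(0<=h<n | P h) sz s h + ledge s g.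

Lemma sum_double (A : pred nat) : \sum_(0<=h<n | A h) (sz s h + sz s h) = 2 * \sum_(0<=h<n | A h) sz s h.
Proof. by rewrite big_split /= mul2n addnn. Qed.

Lemma resp_phase1 g : g < n -> P g ->
  resp s (schedule s B) g <= (mtot s - ledge s g) + 2 * \sum_(0<=h<n | P h && (g < h)) sz s h.
Proof.
move=> gn Pg; set p0 := ledge s g.
have p0m : p0 + sz s g <= mtot s by apply: ledge_mtot.
apply: (@leq_trans (K s B (mtot s) p0)).
  apply: resp_le; apply: readsI; rewrite /schedule drop_phase1; last by lia.
  have DE : D p0 = detour p0 (br s (g, g)).
    rewrite /detours_at (undup_id (BofP_uniq s P)) /BofP filter_map -filter_predI.
    rewrite (@eq_in_filter _ _ (pred1 g)); last first.
      move=> h; rewrite mem_iota add0n => /andP[_ hn] /=; rewrite /p0.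
      apply/andP/eqP => [[/eqP e Ph]|->]; last by rewrite Pg eqxx.
      exact: (ledge_inj spos hn gn e).
    by rewrite filter_pred1_uniq ?iota_uniq ?mem_iota //= cats0.
  have q0 : br s (g, g) - p0 = sz s g by rewrite /br /rpos /lpos /= /p0 /ledge; lia.
  rewrite phase1E DE /detour q0 -!catA -/p0 -cat_cons.
  by rewrite take_size_cat //= size_iota.
rewrite /K leq_add2l; under eq_bigr => i _ do rewrite size_DP.
have -> : \sum_(p0.+1 <= i < (mtot s).+1) \sum_(0 <= h < n | P h && (ledge s h == i)) (sz s h + sz s h)
  = \sum_(0<=h<n | P h && (p0.+1 <= ledge s h < (mtot s).+1)) (sz s h + sz s h) by apply: sum_exch.
rewrite -sum_double; apply: sum_cond_le => h hn /andP[Ph /andP[lt _]]; rewrite Ph leqnn andbT /=.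
by rewrite -(ledge_ltE spos gn hn).
Qed.

Lemma resp_phase2 g : g < n ->
  resp s (schedule s B) g <= mtot s + 2 * \sum_(0<=h<n | P h) sz s h + ledge s g.
Proof.
move=> gn; have gm : ledge s g + sz s g <= mtot s by apply: ledge_mtot.
apply: (@leq_trans (ledge s g + size (phase1 s B (mtot s)))).
  apply: resp_le; apply: readsI; rewrite /schedule -drop_drop drop_last last_phase1.
  rewrite (_ : 0 :: iota 1 (mtot s) = iota 0 (mtot s).+1) // drop_iota take_iota add0n.
  by congr iota; apply/minn_idPl; lia.
rewrite addnC leq_add2r size_phase1 leq_add2l; under eq_bigr => i _ do rewrite size_DP.
rewrite sum_exch -sum_double; apply: sum_cond_le => h hn /andP[Ph _]; by rewrite Ph leqnn.
Qed.

Lemma resp_tP g : g < n -> resp s (schedule s B) g <= tP g.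
Proof.
rewrite /tP; case: ifP => Pg gn; first exact: resp_phase1.
exact: resp_phase2.
Qed.
End S2.

Lemma sumn_map_le' (T : eqType) (l : seq T) (F G : T -> nat) :
  (forall x, x \in l -> F x <= G x) -> sumn [seq F x | x <- l] <= sumn [seq G x | x <- l].
Proof.
elim: l => [|a l IH] //= H; apply: leq_add; first by apply: H; rewrite mem_head.
by apply: IH => x xl; apply: H; rewrite in_cons xl orbT.
Qed.

Section S3.
Variables (s req : seq nat).
Hypothesis spos : all (fun x => 0 < x) s.
Local Notation n := (size s).

Lemma sum_req (F : nat -> nat) : all (fun f => f < n) req ->
  sumn [seq F f | f <- req] = \sum_(0<=g<n) nreq req g * F g.
Proof.
rewrite /nreq; elim: req => [|a l IH] /=.
  by move=> _; rewrite big1 // => g _.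
case/andP=> an al; rewrite IH //.
rewrite (_ : \sum_(0 <= g < n) (count_mem g (a :: l)) * F g =
  \sum_(0 <= g < n) ((if g == a then F g else 0) + (count_mem g l) * F g)).
  by rewrite big_split /= sum_pick.
by apply: eq_bigr => g _ /=; rewrite mulnDl eq_sym; case: eqP => _; lia.
Qed.

Variable P : pred nat.

Lemma sumP_split g : g < n -> \sum_(0<=h<n | P h) sz s h =
  Ysum s P g + (if P g then sz s g else 0) + \sum_(0<=h<n | P h && (g < h)) sz s h.
Proof.
move=> gn; rewrite /Ysum -(sum_pick (fun h => if P h then sz s h else 0) gn).
rewrite big_mkcond [X in _ = X + _ + _]big_mkcond [X in _ = _ + X]big_mkcond -!big_split /=; apply: eq_bigr => h _.
case: (P h) => /=; case: eqP => /= e; case: (ltngtP h g) => /= c; lia.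
Qed.

Lemma sumgt_split g : \sum_(0<=h<n | g < h) sz s h =
  \sum_(0<=h<n | P h && (g < h)) sz s h + Xn s P g.
Proof.
rewrite /Xn big_mkcond [X in _ = X + _]big_mkcond [X in _ = _ + X]big_mkcond -big_split /=; apply: eq_bigr => h _.
by case: (P h); case: (g < h); rewrite /= ?addn0.
Qed.

Lemma ident g : g < n ->
  tP s P g + 2 * (sz s g + Xn s P g) = 3 * (mtot s - ledge s g) + 2 * (if P g then 0 else ledge s g + Ysum s P g).
Proof.
move=> gn; have M := mtot_split spos gn; rewrite sumgt_split in M.
have S := sumP_split gn; rewrite /tP.
move: M S; set a := \sum_(0<=h<n | P h && (g < h)) sz s h; set b := Xn s P g.
set c := Ysum s P g; set d := \sum_(0<=h<n | P h) sz s h.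
by case: (P g) => M S; lia.
Qed.
End S3.

Theorem proposition7 (s req : seq nat) :
  all (fun x => 0 < x) s ->
  all (fun f => f < size s) req ->
  forall tr : seq nat, feasible s req tr ->
  v s req (FGS s req) <= 3 * total_resp s req tr.
Proof.
move=> spos rq tr ft.
have [P [EB inv]] := @FGS_inv s req spos.
rewrite /v /total_resp EB.
apply: (@leq_trans (sumn [seq tP s P f | f <- req])).
  by apply: sumn_map_le' => f fr; apply: resp_tP => //; exact: (allP rq).
rewrite (@sum_req s req spos) //.
set LB := \sum_(0 <= g < size s) nreq req g * (mtot s - ledge s g).
have key : \sum_(0 <= g < size s) nreq req g * tP s P g + 2 * R0 s req P = 3 * LB + 2 * LHS_ s req P.
  rewrite /R0 /LHS_ /LB !big_distrr /= -!big_split /=.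
  apply: eq_big_nat => g /andP[_ gn].
  have := @ident s spos P g gn. nia.
have lb : LB <= sumn [seq resp s tr f | f <- req].
  rewrite /LB -(@sum_req s req spos (fun f => mtot s - ledge s f)) //.
  apply: (@sumn_map_le' _ req (fun f => mtot s - ledge s f) (resp s tr)) => f fr.
  exact: (resp_lb ft fr).
lia.
Qed.
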